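(* Let $d\ge1$ and $t\ge1$ be integers and $\nu\in(0,1)$. Define $r>0$ by \[ r^2=(1-\nu)\frac{d+2}{t(t+d)}. \] Then $\widetilde P^{(\frac d2,\frac d2-1)}_t(\cos\phi)\ge\nu$ for all $0\le\phi\le r$.
   Context: For $\alpha,\beta>-1$, $P^{(\alpha,\beta)}_t$ denotes the Jacobi polynomial of degree $t$ (orthogonal on $[-1,1]$ with respect to $(1-u)^\alpha(1+u)^\beta$), normalized by $P^{(\alpha,\beta)}_t(1)=\binom{t+\alpha}{t}$ with $\binom{x}{y}=\frac{\Gamma(x+1)}{\Gamma(y+1)\Gamma(x-y+1)}$. The normalized Jacobi polynomial is $\widetilde P^{(\alpha,\beta)}_t:=P^{(\alpha,\beta)}_t/P^{(\alpha,\beta)}_t(1)$. *)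

(* Defs.v *)
From HB Require Import structures.
From mathcomp Require Import all_boot all_order all_algebra.
From mathcomp Require Import all_classical all_reals all_analysis.
Set Implicit Arguments. Unset Strict Implicit. Unset Printing Implicit Defensive.
Import Order.TTheory GRing.Theory Num.Theory.
Local Open Scope ring_scope.

(* Generalized binomial coefficient binom(x, k) for real x and natural k:
   x (x-1) ... (x-k+1) / k!, which equals Gamma(x+1)/(Gamma(k+1)Gamma(x-k+1))
   whenever the latter is defined. *)
Definition gbinom {R : realType} (x : R) (k : nat) : R :=
  (\prod_(i < k) (x - i%:R)) / (k`!)%:R.

(* Jacobi polynomial P_t^{(a,b)}(u), explicit formula (Szego (4.3.2)):
   sum_{s=0}^t binom(t+a, t-s) binom(t+b, s) ((u-1)/2)^s ((u+1)/2)^(t-s).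
   It satisfies P_t^{(a,b)}(1) = binom(t+a, t). *)
Definition jacobiP {R : realType} (a b : R) (t : nat) (u : R) : R :=
  \sum_(s < t.+1)
    gbinom (t%:R + a) (t - s) * gbinom (t%:R + b) s
    * ((u - 1) / 2) ^+ s * ((u + 1) / 2) ^+ (t - s).

Definition jacobiPn {R : realType} (a b : R) (t : nat) (u : R) : R :=
  jacobiP a b t u / jacobiP a b t 1.

(* Main.v *)
Require Import Defs.
From HB Require Import structures.
From mathcomp Require Import all_boot all_order all_algebra.
From mathcomp Require Import all_classical all_reals all_analysis.
From mathcomp Require Import ring lra.
Import Order.TTheory GRing.Theory Num.Theory.
From mathcomp Require Import zify.

Module H.
Import numFieldNormedType.Exports.
Local Open Scope ring_scope.

Lemma abs_sin_le (R : realType) (y : R) : 0 <= y -> `|sin y| <= y.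
Proof.
move=> y0.
have [|c _ Hc] := @MVT_segment _ sin cos _ _ y0.
  first [ apply: (@continuous_subspaceT R R) => z; exact: continuous_sin | idtac "v1 fail"; fail ].
move: Hc; rewrite sin0 subr0 subr0 => ->.
rewrite normrM (ger0_norm y0).
have := cos_max c; nra.
Qed.

Lemma one_sub_cos (R : realType) (phi : R) : 0 <= phi ->
  (1 - cos phi) / 2 <= phi ^+ 2 / 4.
Proof.
move=> p0.
have e : phi = (phi / 2) *+ 2 by rewrite mulr2n; field.
have h2 : 0 <= phi / 2 by lra.
have hs := @abs_sin_le R _ h2.
have hsq : sin (phi / 2) ^+ 2 <= (phi / 2) ^+ 2.
  rewrite -real_normK ?num_real //; have := normr_ge0 (sin (phi / 2)); nra.
rewrite {1}e cos_mulr2n cos2sin2.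
have -> : phi ^+ 2 / 4 = (phi / 2) ^+ 2 by field.
lra.
Qed.

Lemma gbinom0 (R : realType) (y : R) : gbinom y 0 = 1.
Proof. by rewrite /gbinom big_ord0 fact0 divr1. Qed.

Lemma gbinomS (R : realType) (y : R) k :
  gbinom y k.+1 = gbinom y k * (y - k%:R) / k.+1%:R.
Proof.
rewrite /gbinom big_ord_recr /= factS natrM.
have h1 : (k.+1%:R : R) != 0 by rewrite pnatr_eq0.
have h2 : ((k`!)%:R : R) != 0 by rewrite pnatr_eq0 -lt0n fact_gt0.
field; apply/andP; split => //.
Qed.

Lemma gbinom_ge0 (R : realType) (y : R) k :
  (forall i, (i < k)%N -> 0 <= y - i%:R) -> 0 <= gbinom y k.
Proof.
move=> H; rewrite /gbinom divr_ge0 //; apply: prodr_ge0 => i _; exact: H.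
Qed.

Lemma alt_sum_ge0 (R : realType) n (B : nat -> R) :
  (forall s, (s < n)%N -> 0 <= B s) ->
  (forall s, (s.+1 < n)%N -> B s.+1 <= B s) ->
  0 <= \sum_(s < n) (-1) ^+ s * B s /\ ((0 < n)%N -> \sum_(s < n) (-1) ^+ s * B s <= B 0%N).
Proof.
elim: n B => [|n IH] B H0 Hd.
  by rewrite big_ord0 lexx.
rewrite big_ord_recl expr0 mul1r.
under eq_bigr => i _ do rewrite lift0 /= exprS mulN1r mulNr.
rewrite sumrN.
have [h1 h2] := IH (fun s => B s.+1) (fun s hs => H0 s.+1 hs) (fun s hs => Hd s.+1 hs).
case: n IH Hd H0 h1 h2 => [|n] _ Hd H0 h1 h2.
  rewrite big_ord0 oppr0 addr0; split => [|_]; [exact: H0|exact: lexx].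
have := Hd 0%N isT; have := H0 0%N isT; have := h2 isT; move=> a b c.
split; [lra|move=> _; lra].
Qed.

Lemma alt_split (R : realType) n (B : nat -> R) :
  \sum_(s < n.+2) (-1) ^+ s * B s =
  B 0%N - B 1%N + \sum_(s < n) (-1) ^+ s * B s.+2.
Proof.
rewrite big_ord_recl big_ord_recl.
under eq_bigr => i _ do rewrite !lift0 /= !exprS !mulN1r opprK.
rewrite /= expr0 expr1; ring.
Qed.

Lemma bernoulli_ineq (R : realType) (x : R) n : 0 <= x <= 1 ->
  1 - n%:R * x <= (1 - x) ^+ n.
Proof.
case/andP => x0 x1; elim: n => [|n IH]; first by rewrite expr0 mul0r subr0.
rewrite exprSr -natr1.
have h : 0 <= 1 - x by lra.
have := ler_wpM2r h IH.
have : 0 <= n%:R * x * x by apply: mulr_ge0 => //; apply: mulr_ge0.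
nra.
Qed.

Lemma frac_le (R : realType) (a b c e : R) :
  0 < b -> 0 < e -> a * e <= c * b -> a / b <= c / e.
Proof. by move=> b0 e0 h; rewrite ler_pdivrMr // mulrAC ler_pdivlMr. Qed.

Lemma gbinom_gt0 (R : realType) (y : R) k :
  (forall i, (i < k)%N -> 0 < y - i%:R) -> 0 < gbinom y k.
Proof.
move=> H; rewrite /gbinom divr_gt0 ?ltr0n ?fact_gt0 //.
by apply: prodr_gt0 => i _; exact: H.
Qed.
End H.
Import H.
Local Open Scope ring_scope.

Theorem proposition3p2 (R : realType) (d t : nat) (nu r : R) :
  (1 <= d)%N -> (1 <= t)%N -> 0 < nu -> nu < 1 -> 0 < r ->
  r ^+ 2 = (1 - nu) * (d%:R + 2) / (t%:R * (t%:R + d%:R)) ->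
  forall phi : R, 0 <= phi -> phi <= r ->
    nu <= jacobiPn (d%:R / 2) (d%:R / 2 - 1) t (cos phi).
Proof.
move=> d1 t1 nu0 nu1 r0 hr phi p0 pr.
have D1 : 1 <= d%:R :> R by rewrite ler1n.
have T1 : 1 <= t%:R :> R by rewrite ler1n.
set D := d%:R : R in D1 hr *.
set T := t%:R : R in T1 hr *.
set a := D / 2. set b := D / 2 - 1.
set x := (1 - cos phi) / 2 : R.
have x0 : 0 <= x by rewrite /x; have := cos_le1 phi; lra.
have xphi : x <= phi ^+ 2 / 4 by exact: one_sub_cos.
have pr2 : phi ^+ 2 <= r ^+ 2 by nra.
set Q := T * (T + D).
have Q0 : 0 < Q by rewrite /Q; nra.
have rQ : r ^+ 2 * Q = (1 - nu) * (D + 2) by rewrite hr divfK // gt_eqF.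
have xQ : x * Q <= (1 - nu) * (D + 2) / 4.
  have : x * Q <= phi ^+ 2 / 4 * Q by apply: ler_wpM2r; lra.
  have : phi ^+ 2 * Q <= r ^+ 2 * Q by apply: ler_wpM2r; lra.
  rewrite rQ; lra.
have QD : (D + 2) / 2 <= Q by rewrite /Q; nra.
have xhalf : x <= 1 / 2.
  have : x * ((D + 2) / 2) <= x * Q by apply: ler_wpM2l.
  nra.
set B := fun s : nat => gbinom (T + a) (t - s) * gbinom (T + b) s * x ^+ s * (1 - x) ^+ (t - s).
have num : jacobiP a b t (cos phi) = \sum_(s < t.+1) (-1) ^+ s * B s.
  rewrite /jacobiP; apply: eq_bigr => s _.
  have e1 : (cos phi - 1) / 2 = - x.
    rewrite /x; lra.
  have e2 : (cos phi + 1) / 2 = 1 - x by rewrite /x; lra.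
  rewrite e1 e2 (exprNn x) /B /T; ring.
set G := gbinom (T + a) t.
have den : jacobiP a b t 1 = G.
  rewrite /jacobiP big_ord_recl big1 ?addr0.
    rewrite subn0 gbinom0 expr0 !mulr1.
    have -> : ((1 + 1) / 2 : R) = 1 by lra.
    by rewrite expr1n mulr1.
  by move=> i _; rewrite lift0 subrr mul0r expr0n /= mulr0 mul0r.
have Ta : forall i, (i <= t)%N -> 0 <= T - i%:R.
  by move=> i hi; rewrite subr_ge0 /T ler_nat.
have ga0 : forall k, (k <= t)%N -> 0 <= gbinom (T + a) k.
  move=> k hk; apply: gbinom_ge0 => i hi.
  have := Ta i (leq_trans (ltnW hi) hk); rewrite /a; lra.
have gb0 : forall k, (k <= t)%N -> 0 <= gbinom (T + b) k.
  move=> k hk; apply: gbinom_ge0 => i hi.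
  have := Ta i.+1 (leq_trans hi hk); rewrite -natr1 /b; lra.
have Hpos : forall s, (s < t.+1)%N -> 0 <= B s.
  move=> s hs; rewrite /B; apply: mulr_ge0; last by apply: exprn_ge0; lra.
  apply: mulr_ge0; last by apply: exprn_ge0.
  by apply: mulr_ge0; [apply: ga0; exact: leq_subr|apply: gb0].
have Hdec : forall s, (s.+1 < t.+1)%N -> B s.+1 <= B s.
  move=> s hs.
  have hm : (t - s = (t - s.+1).+1)%N by rewrite subnS prednK // subn_gt0 -ltnS.
  set m := (t - s.+1)%N in hm.
  have hM : m%:R = T - s%:R - 1.
    rewrite /m /T natrB // -natr1; lra.
  have hS0 : 0 <= s%:R :> R by [].
  have hsT : s%:R + 1 <= T by rewrite /T natr1 ler_nat.
  set C := gbinom (T + a) m * gbinom (T + b) s * x ^+ s * (1 - x) ^+ m.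
  have C0 : 0 <= C.
    rewrite /C; apply: mulr_ge0; last by apply: exprn_ge0; lra.
    apply: mulr_ge0; last by apply: exprn_ge0.
    apply: mulr_ge0; [apply: ga0; exact: leq_subr|apply: gb0].
    by apply: ltnW.
  have eB1 : B s.+1 = C * (x * (T + b - s%:R) / (s%:R + 1)).
    rewrite /B /C -/m gbinomS exprSr -natr1; ring.
  have eB0 : B s = C * ((T + a - m%:R) / (m%:R + 1) * (1 - x)).
    rewrite /B /C hm gbinomS exprSr -natr1; ring.
  rewrite eB1 eB0; apply: ler_wpM2l => //.
  rewrite [X in _ <= X]mulrAC; apply: frac_le; first lra.
    rewrite hM; lra.
  rewrite hM.
  have h1 : (T + b - s%:R) * (T - s%:R) <= (T + D) * T.
    rewrite /b; apply: ler_pM; lra.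
  have h2 : x * ((T + b - s%:R) * (T - s%:R)) <= x * ((T + D) * T) by apply: ler_wpM2l.
  have eQ : (T + D) * T = Q by rewrite /Q mulrC.
  have h3 : D / 2 + 1 <= (T + a - (T - s%:R - 1)) * (s%:R + 1).
    rewrite /a.
    have -> : T + D / 2 - (T - s%:R - 1) = D / 2 + 1 + s%:R by ring.
    have : 0 <= (D / 2 + 1 + s%:R) * s%:R by apply: mulr_ge0; lra.
    lra.
  have h4 : (D / 2 + 1) * (1 / 2) <= (T + a - (T - s%:R - 1)) * (s%:R + 1) * (1 - x).
    apply: ler_pM; lra.
  have e : T - s%:R - 1 + 1 = T - s%:R by ring.
  rewrite e.
  have eL : x * (T + b - s%:R) * (T - s%:R) = x * ((T + b - s%:R) * (T - s%:R)) by ring.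
  have eR : (T + a - (T - s%:R - 1)) * (1 - x) * (s%:R + 1) = (T + a - (T - s%:R - 1)) * (s%:R + 1) * (1 - x) by ring.
  rewrite eL eR.
  have : x * Q <= (D + 2) / 4.
    have : (1 - nu) * (D + 2) <= D + 2 by nra.
    lra.
  rewrite -eQ in h2 *; lra.
have [t' ht] : exists t', t = t'.+1 by exists t.-1; rewrite prednK.
have spl := @alt_split R t' B; rewrite -ht in spl.
have Hp2 : forall s, (s < t')%N -> 0 <= B s.+2.
  by move=> s hs; apply: Hpos; rewrite ht !ltnS.
have Hd2 : forall s, (s.+1 < t')%N -> B s.+3 <= B s.+2.
  by move=> s hs; apply: Hdec; rewrite ht !ltnS.
have [rest0 _] := @alt_sum_ge0 R t' (fun s => B s.+2) Hp2 Hd2.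
have hT : T = t'%:R + 1 by rewrite /T ht -natr1.
set y := (1 - x) ^+ t'.
have hB0 : B 0%N = G * ((1 - x) * y).
  by rewrite /B subn0 gbinom0 expr0 !mulr1 -/G ht exprS.
have hB1 : B 1%N = gbinom (T + a) t' * (T + b) * x * y.
  by rewrite /B ht subSS subn0 expr1 gbinomS gbinom0 mul1r subr0 divr1.
have a0 : 0 < a by rewrite /a; lra.
have hG : G = gbinom (T + a) t' * ((a + 1) / T).
  rewrite /G ht gbinomS.
  have -> : T + a - t'%:R = a + 1 by rewrite hT; ring.
  by rewrite -natr1 -hT mulrA.
have G0 : 0 < G.
  apply: gbinom_gt0 => i hi.
  have := Ta i (ltnW hi); lra.
set k := T * (T + b) / (a + 1).
set w := 1 - x - k * x.
have hw : B 0%N - B 1%N = G * (y * w).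
  rewrite hB0 hB1 hG /w /k; field; apply/andP; split; lra.
have ek : T + k = 2 * Q / (D + 2).
  rewrite /k /Q /a /b; field; rewrite -/D; apply: lt0r_neq0; lra.
have e3 : x * (T + k) * (D + 2) = 2 * (x * Q).
  rewrite ek; field; lra.
have hxk : x * (T + k) <= (1 - nu) / 2.
  rewrite -(@ler_pM2r _ (D + 2)); last lra.
  rewrite e3; lra.
have hk0 : 0 <= k.
  rewrite /k; apply: divr_ge0; last lra.
  apply: mulr_ge0; rewrite /b; lra.
have hkx : 0 <= k * x by apply: mulr_ge0.
have hxT : x <= x * T.
  have : 0 <= x * (T - 1) by apply: mulr_ge0; lra.
  lra.
have hw0 : 0 <= w by rewrite /w; lra.
have hw1 : w <= 1 by rewrite /w; lra.
have hy : 1 - t'%:R * x <= y.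
  by apply: bernoulli_ineq; apply/andP; split; lra.
have p1 : 0 <= (y - (1 - t'%:R * x)) * w by apply: mulr_ge0; lra.
have p2 : 0 <= (t'%:R * x) * (1 - w).
  apply: mulr_ge0; last lra.
  by apply: mulr_ge0.
have yw : nu <= y * w.
  have et : t'%:R = T - 1 by rewrite hT; ring.
  rewrite et in p1 p2.
  have wdef : w = 1 - x - k * x by [].
  lra.
rewrite /jacobiPn num den spl.
rewrite ler_pdivlMr //.
have : G * nu <= G * (y * w) by apply: ler_wpM2l; lra.
rewrite -hw; lra.
Qed.
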